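(* Let $k\ge 1$ and $n\ge 2k$. Then \[ l_k(n)=\binom{n-1}{\lceil k/2\rceil-1}+\binom{n-1}{\lfloor k/2\rfloor-1}. \] Equivalently, for $k\ge1$: $l_{2k}(n)=2\binom{n-1}{k-1}$ whenever $n\ge 4k$, and $l_{2k+1}(n)=\binom{n}{k}$ whenever $n\ge 4k+2$. In particular, for $n\ge 2k$, $l_k(n)$ is a polynomial in $n$ of degree $\lceil (k-2)/2\rceil$.
   Context: For a positive integer $m$, $P_m$ denotes the path with vertex set $[m]=\{1,\dots,m\}$ in which $i$ and $j$ are adjacent iff $|i-j|=1$. An endomorphism of $P_n$ is a map $f:[n]\to[n]$ with $|f(i)-f(i+1)|=1$ for all $1\le i\le n-1$. Every endomorphism $f$ induces a partition of $[n]$ whose blocks are the nonempty fibers $f^{-1}(y)$. Let $\mathscr C(P_n)$ be the set of partitions of $[n]$ induced by endomorphisms of $P_n$, and for $1\le k\le n-1$ let $l_k(n)=|\{\rho\in\mathscr C(P_n): \rho \text{ has exactly } n-k+1 \text{ blocks}\}|$. Convention: $\binom{a}{b}=0$ if $b<0$ or $b>a$. *)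

(* Defs.v *)
From mathcomp Require Import all_boot all_order all_algebra.
Set Implicit Arguments. Unset Strict Implicit. Unset Printing Implicit Defensive.

(* The path P_n is modelled on vertex set 'I_n = {0,...,n-1}
   (vertex i+1 of the paper is the ordinal i); i ~ j iff |i - j| = 1. *)
Definition path_adj (n : nat) (i j : 'I_n) : bool :=
  (val i == (val j).+1) || (val j == (val i).+1).

Definition is_path_endo (n : nat) (f : {ffun 'I_n -> 'I_n}) : bool :=
  [forall i : 'I_n, forall j : 'I_n,
     (val j == (val i).+1) ==> path_adj (f i) (f j)].

Definition induced_partition (n : nat) (f : {ffun 'I_n -> 'I_n})
  : {set {set 'I_n}} := preim_partition f [set: 'I_n].

Definition CP (n : nat) : {set {set {set 'I_n}}} :=
  [set induced_partition f | f in [pred f | is_path_endo f]].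

Definition l_k (k n : nat) : nat :=
  #|[set rho in CP n | #|rho| == n - k + 1]|.

Definition binomz (a : nat) (b : int) : nat :=
  match b with Posz m => 'C(a, m) | Negz _ => 0 end.

(* Main.v *)
Require Import Defs.
From mathcomp Require Import all_boot all_order all_algebra.
From mathcomp Require Import zify.
Set Implicit Arguments. Unset Strict Implicit. Unset Printing Implicit Defensive.

Fixpoint all_seqs (L : nat) : seq (seq bool) :=
  if L is L'.+1 then [seq true :: s | s <- all_seqs L'] ++ [seq false :: s | s <- all_seqs L']
  else [:: [::]].

Lemma size_all_seqs L : size (all_seqs L) = 2 ^ L.
Proof. elim: L => //= L IH; rewrite size_cat !size_map IH expnS; lia. Qed.

Lemma mem_cons_map (b a : bool) s (l : seq (seq bool)) :
  (a :: s \in [seq b :: x | x <- l]) = (a == b) && (s \in l).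
Proof.
apply/mapP/andP => [[x xl [-> ->]]|[/eqP -> sl]]; first by [].
by exists s.
Qed.

Lemma nil_cons_map (b : bool) (l : seq (seq bool)) :
  ([::] \in [seq b :: x | x <- l]) = false.
Proof. by apply/mapP => [[x _]]. Qed.

Lemma mem_all_seqs L s : (s \in all_seqs L) = (size s == L).
Proof.
elim: L s => [|L IH] s.
  by case: s.
case: s => [|b s] /=; rewrite mem_cat.
  by rewrite !nil_cons_map.
by rewrite !mem_cons_map IH; case: b; rewrite ?orbF.
Qed.

Lemma uniq_all_seqs L : uniq (all_seqs L).
Proof.
elim: L => //= L IH; rewrite cat_uniq !map_inj_uniq ?IH; try by move=> x y [].
rewrite /= andbT; apply/hasPn => x /mapP [y _ ->]; by rewrite mem_cons_map.
Qed.

Lemma card_tuple_pred L (P : pred (seq bool)) :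
  #|[set t : L.-tuple bool | P (val t)]| = count P (all_seqs L).
Proof.
rewrite cardsE cardE /enum_mem size_filter -enumT.
have pe : perm_eq (map val (enum {: L.-tuple bool})) (all_seqs L).
  apply: uniq_perm; first by rewrite map_inj_uniq ?enum_uniq //; apply: val_inj.
    exact: uniq_all_seqs.
  move=> x; rewrite mem_all_seqs; apply/mapP/idP => [[t _ ->]|/eqP sx].
    by rewrite size_tuple.
  by exists (Tuple (introT eqP sx)); rewrite ?mem_enum.
rewrite -((permP pe) P) enumT; by elim: (Finite.enum _) => //= t l ->.
Qed.

Fixpoint reach (S c : nat) (s : seq bool) : bool :=
  (S <= c) || (if s is b :: s' then reach S (if b then c.+1 else c.-1) s' else false).

Lemma reachS S c s : reach S.+1 c s -> reach S c s.
Proof.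
elim: s c => [|b s IH] c /=; first by rewrite !orbF => /ltnW.
by case/orP => [/ltnW ->|/IH ->]; rewrite ?orbT.
Qed.

Definition E (L m : nat) := \sum_(i < L.+1) (m + 2 * i <= L) * 'C(L, i).
Definition G (L m : nat) := E L m + E L m.+1.

Lemma E_rec L m : E L.+1 m.+1 = E L m + E L m.+2.
Proof.
rewrite /E big_ord_recl /= bin0 muln1.
rewrite (eq_bigr (fun i : 'I_L.+1 => (m.+2 + 2 * i <= L) * 'C(L, i.+1) + (m.+2 + 2 * i <= L) * 'C(L, i))); last first.
  move=> i _; rewrite /bump /= binS mulnDr.
  have -> : (m.+1 + 2 * i.+1 <= L.+1) = (m.+2 + 2 * i <= L) by apply/idP/idP; lia.
  by [].
rewrite big_split /= addnA; congr (_ + _).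
rewrite [in RHS]big_ord_recl /= bin0 muln1 !muln0 !addn0.
congr (_ + _); rewrite big_ord_recr /= bin_small // muln0 addn0.
apply: eq_bigr => i _; rewrite /bump /=.
have -> : (m + 2 * i.+1 <= L) = (m.+2 + 2 * i <= L) by apply/idP/idP; lia.
by [].
Qed.

Lemma G_rec L m : G L.+1 m.+1 = G L m + G L m.+2.
Proof. rewrite /G !E_rec; lia. Qed.

Lemma G_big L m : L < m -> G L m = 0.
Proof.
move=> H; rewrite /G /E !big1 // => i _; rewrite leqNgt (_ : L < _) ?mul0n //; lia.
Qed.

Lemma G0 L : G 0 L = (L == 0).
Proof. by rewrite /G /E !big_ord_recl !big_ord0 /=; case: L. Qed.

Lemma sum_bin L : \sum_(i < L.+1) 'C(L, i) = 2 ^ L.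
Proof.
have := expnDn 1 1 L; rewrite (_ : 1 + 1 = 2) // => ->.
by apply: eq_bigr => i _; rewrite !exp1n !muln1.
Qed.

Lemma G_zero L : G L 0 = 2 ^ L.
Proof.
rewrite /G /E -sum_bin.
rewrite [X in _ + X](reindex_inj rev_ord_inj) -big_split.
apply: eq_bigr => i _.
have iL := ltn_ord i.
have -> : (rev_ord i : nat) = L - i by rewrite /= subSS.
rewrite bin_sub; last by rewrite -ltnS.
rewrite /= -mulnDl.
have -> : (0 + 2 * i <= L) + (1 + 2 * (L - i) <= L) = 1.
  case: (leqP (0 + 2 * i) L) => h1; case: (leqP (1 + 2 * (L - i)) L) => h2 //; exfalso; lia.
by rewrite mul1n.
Qed.

Lemma count_reach S c L :
  count (reach S c) (all_seqs L) =
  if S <= c then 2 ^ L else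
  if L is L'.+1 then count (reach S c.+1) (all_seqs L') + count (reach S c.-1) (all_seqs L')
  else 0.
Proof.
case: L => [|L] /=; case: leqP => H /=.
- by [].
- by [].
- rewrite (eq_count (a2 := predT)); first by rewrite count_predT size_cat !size_map size_all_seqs expnS; lia.
  by move=> s /=; case: s => [|b s] /=; rewrite H.
- rewrite count_cat !count_map.
  rewrite (eq_count (a1 := preim _ _) (a2 := reach S c.+1)); last by move=> s /=; rewrite leqNgt H.
  rewrite (eq_count (a1 := preim _ _) (a2 := reach S c.-1)) //; by move=> s /=; rewrite leqNgt H.
Qed.

Lemma K_formula S L c : c <= S -> L <= 2 * S ->
  count (reach S c) (all_seqs L) = G L (S - c) + G L (S + c + 1).
Proof.
elim: L c => [|L IH] c cS LS; rewrite count_reach.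
  case: leqP => H.
    have -> : S - c = 0 by lia.
    rewrite !G0 /=.
    by have -> : (S + c + 1 == 0) = false by apply/eqP; lia.
  rewrite !G0.
  have -> : (S + c + 1 == 0) = false by apply/eqP; lia.
  by have -> : (S - c == 0) = false by apply/eqP; lia.
case: leqP => H.
  have -> : S - c = 0 by lia.
  by rewrite G_zero G_big ?addn0 //; lia.
have l1 : L <= 2 * S by lia.
rewrite (IH c.+1) // (IH c.-1) //; last by lia.
case: c H cS => [|c] H cS.
  case: S H cS LS IH l1 => [//|S] H _ _ _ _.
  have -> : S.+1 - 1 = S by lia.
  have -> : S.+1 + 1 + 1 = S.+2.+1 by lia.
  rewrite /= !subn0 !addn0 (_ : S.+1 + 1 = S.+2); last by lia.
  rewrite !G_rec; lia.
have -> : S - c.+1.-1 = (S - c.+2).+2 by lia.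
have -> : S - c.+1 = (S - c.+2).+1 by lia.
have -> : S + c.+2 + 1 = (S + c.+1).+2 by lia.
have -> : S + c.+1.-1 + 1 = (S + c.+1) by lia.
have -> : S + c.+1 + 1 = (S + c.+1).+1 by lia.
rewrite !G_rec; lia.
Qed.

Definition rexact S (s : seq bool) := reach S 0 s && ~~ reach S.+1 0 s.

Lemma count_andNsub (T : Type) (a b : pred T) l :
  (forall x, b x -> a x) -> count (fun x => a x && ~~ b x) l + count b l = count a l.
Proof.
move=> ba; elim: l => //= x l IH; rewrite -IH.
case Bx: (b x); first by rewrite (ba _ Bx) /=; lia.
by rewrite /=; case: (a x) => /=; lia.
Qed.

Lemma count_rexact S L : L <= 2 * S ->
  count (rexact S) (all_seqs L) = G L S - G L S.+2.
Proof.
move=> LS.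
have := @count_andNsub _ _ _ (all_seqs L) (@reachS S 0).
rewrite (@K_formula S L 0) // (@K_formula S.+1 L 0) //; last by lia.
rewrite !subn0 !addn0 !addn1 => H.
rewrite /rexact; lia.
Qed.

Lemma E_diff L m : m <= L -> E L m = E L m.+2 + 'C(L, (L - m)./2).
Proof.
move=> mL.
have aL : (L - m)./2 < L.+1.
  rewrite ltnS; apply: leq_trans (leq_subr m L); rewrite -divn2; exact: leq_div.
rewrite /E (bigD1 (Ordinal aL)) //= [in RHS](bigD1 (Ordinal aL)) //=.
have h := odd_double_half (L - m).
rewrite addnAC; congr (_ + _).
  case: (odd (L - m)) h => /= h; rewrite -!muln2 in h *.
    have -> : (m + 2 * (L - m)./2 <= L) = true by apply/idP; lia.
    have -> : (m.+2 + 2 * (L - m)./2 <= L) = false by apply/negbTE; rewrite -ltnNge; lia.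
    by rewrite mul1n mul0n.
  have -> : (m + 2 * (L - m)./2 <= L) = true by apply/idP; lia.
  have -> : (m.+2 + 2 * (L - m)./2 <= L) = false by apply/negbTE; rewrite -ltnNge; lia.
  by rewrite mul1n mul0n.
apply: eq_bigr => i /negbTE; rewrite -val_eqE /= => ne.
have h2 : i <> (L - m)./2 :> nat by move=> E; rewrite E eqxx in ne.
suff -> : (m + 2 * i <= L) = (m.+2 + 2 * i <= L) by [].
case: (odd (L - m)) h => /= h; rewrite -!muln2 in h; apply/idP/idP; lia.
Qed.

Lemma E_big L m : L < m -> E L m = 0.
Proof.
move=> H; rewrite /E big1 // => i _; rewrite leqNgt (_ : L < _) ?mul0n //; lia.
Qed.

Definition up (s : seq bool) i := count id (take i s).
Definition hp (s : seq bool) i := size s + 2 * up s i - i.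

Lemma up0 s : up s 0 = 0.
Proof. by rewrite /up take0. Qed.

Lemma up_cons b s i : up (b :: s) i.+1 = b + up s i.
Proof. by []. Qed.

Lemma up_le s i : up s i <= i.
Proof. rewrite /up; apply: leq_trans (count_size _ _) _; rewrite size_take; case: ltnP => //; lia. Qed.

Lemma up_mono s i j : i <= j -> up s i <= up s j /\ up s j <= up s i + (j - i).
Proof.
move=> ij; rewrite /up -(subnKC ij) takeD count_cat; split; first exact: leq_addr.
rewrite leq_add2l; apply: leq_trans (count_size _ _) _; rewrite size_take; case: ltnP => //; lia.
Qed.

Lemma up_step s i : i < size s -> up s i.+1 = up s i + nth false s i.
Proof. by move=> H; rewrite /up (take_nth false H) -cats1 count_cat /= addn0. Qed.

Lemma up_negb s i : i <= size s -> up (map negb s) i = i - up s i.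
Proof.
move=> H; rewrite /up -map_take count_map.
have := count_predC id (take i s); rewrite size_take.
have -> : (if i < size s then i else size s) = i by case: ltnP => //; lia.
have -> : count (preim negb id) (take i s) = count (predC id) (take i s) by apply: eq_count.
lia.
Qed.

Definition riseP S s := exists i j, [/\ i <= j, j <= size s & S + j + 2 * up s i <= i + 2 * up s j].
Definition fallP S s := exists i j, [/\ i <= j, j <= size s & S + i + 2 * up s j <= j + 2 * up s i].

Lemma reach_iff S c s : reach S c s <->
  exists i j, [/\ i <= j, j <= size s & S + j + 2 * up s i <= i + 2 * up s j + (i == 0) * c].
Proof.
elim: s c => [|b s IH] c /=.
  split; first by rewrite orbF => H; exists 0, 0; rewrite up0; split => //; lia.
  case=> i [j [ij j0 H]]; rewrite orbF; move: j0 ij H; rewrite leqn0 => /eqP -> ; rewrite leqn0 => /eqP ->.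
  rewrite up0 /=; lia.
split.
  case/orP => [Sc|].
    by exists 0, 0; rewrite up0; split => //; lia.
  move/IH => [i [j [ij js H]]].
  case: i ij H => [|i] ij H.
    case: b H => H.
      exists 0, j.+1; rewrite up0 up_cons; split => //; lia.
    case: c H => [|c] H.
      exists 1, j.+1; rewrite up_cons up_cons up0; split => //; lia.
    exists 0, j.+1; rewrite up0 up_cons; split => //; lia.
  by exists i.+2, j.+1; rewrite !up_cons; split => //; lia.
case=> i [j [ij js H]].
case: j ij js H => [|j] ij js H.
  by move: ij H; rewrite leqn0 => /eqP ->; rewrite up0 /= => H; rewrite (_ : S <= c) //; lia.
case: (leqP S c) => //= Sc.
apply/IH.
case: i ij H => [|i] ij H.
  rewrite up0 up_cons in H.
  exists 0, j; rewrite up0; split => //; case: b H; case: c Sc => [|c] Sc /= H; lia.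
rewrite !up_cons in H.
by exists i, j; split => //; case: (i == 0) => /=; lia.
Qed.

Lemma riseP_reach S s : riseP S s <-> reach S 0 s.
Proof.
rewrite reach_iff; split => [[i [j [? ? H]]]|[i [j [? ? H]]]]; exists i, j; split => //; lia.
Qed.

Lemma fallP_negb S s : fallP S s <-> riseP S (map negb s).
Proof.
split.
  case=> i [j [ij js H]]; exists i, j; rewrite size_map; split => //.
  have iS : i <= size s by lia.
  rewrite !up_negb //.
  have := up_le s i; have := up_le s j; have := up_mono s ij; lia.
case=> i [j [ij]]; rewrite size_map => js H; exists i, j; split => //.
have iS : i <= size s by lia.
rewrite !up_negb // in H.
have := up_le s i; have := up_le s j; have := up_mono s ij; lia.
Qed.

Lemma rise_fall_excl S s : size s < 2 * S -> riseP S s -> fallP S s -> False.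
Proof.
move=> Ls [i [j [ij js H1]]] [k [l [kl ls H2]]].
have := up_mono s ij; have := up_mono s kl => [[k1 k2] [i1 i2]].
have jiS : S <= j - i by lia.
have lkS : S <= l - k by lia.
case: (leqP i k) => ik; case: (leqP j l) => jl.
-
  have kj : k <= j by lia.
  have := up_mono s ik; have := up_mono s kj; have := up_mono s jl; lia.
- have kl' : k <= l by lia.
  have := up_mono s ik; have := up_mono s (ltnW jl); lia.
- have ij' : i <= j by lia.
  have := up_mono s (ltnW ik); have := up_mono s jl; lia.
- have il : i <= l by lia.
  have := up_mono s (ltnW ik); have := up_mono s il; have := up_mono s (ltnW jl); lia.
Qed.

Definition spanP S s := exists i j, [/\ i <= size s, j <= size s & S + hp s i <= hp s j].

Lemma spanP_iff S s : spanP S s <-> riseP S s \/ fallP S s.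
Proof.
split.
  case=> i [j [iS js H]]; move: H; rewrite /hp.
  have := up_le s i; have := up_le s j.
  case: (leqP i j) => ij.
    have := up_mono s ij => ? ? ? ?; left; exists i, j; split => //; lia.
  have := up_mono s (ltnW ij) => ? ? ? ?; right; exists j, i; split => //; lia.
case=> [[i [j [ij js H]]]|[i [j [ij js H]]]].
  exists i, j; split => //; first lia; rewrite /hp; have := up_le s i; have := up_le s j; lia.
exists j, i; split => //; first lia; rewrite /hp; have := up_le s i; have := up_le s j; lia.
Qed.

Lemma hp_step s i : i < size s ->
  if nth false s i then hp s i.+1 = (hp s i).+1 else hp s i = (hp s i.+1).+1.
Proof.
move=> H; rewrite /hp (up_step H); have := up_le s i.
by case: (nth false s i) => /=; lia.
Qed.

Lemma hp_lip s i j : i <= j -> j <= size s ->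
  hp s j <= hp s i + (j - i) /\ hp s i <= hp s j + (j - i).
Proof.
move=> ij js; rewrite /hp; have := up_mono s ij; have := up_le s i; have := up_le s j; lia.
Qed.

Lemma hp_ivt s a k v : a + k <= size s ->
  minn (hp s a) (hp s (a + k)) <= v <= maxn (hp s a) (hp s (a + k)) ->
  exists t, t <= size s /\ hp s t = v.
Proof.
elim: k => [|k IH] H.
  rewrite addn0 minnn maxnn => /andP [h1 h2]; exists a; split; [lia | apply/eqP; rewrite eqn_leq h1 h2 //].
move=> Hv.
have st := hp_step (_ : a + k < size s); rewrite -addnS in st.
have {}st := st ltac:(lia).
case: (boolP (minn (hp s a) (hp s (a + k)) <= v <= maxn (hp s a) (hp s (a + k)))) => H2.
  by apply: IH => //; lia.
exists (a + k.+1); split => //.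
move: H2 Hv; case: (nth false s (a + k)) st => st; rewrite st; lia.
Qed.

Lemma hp_ivt2 s x y v : x <= size s -> y <= size s ->
  minn (hp s x) (hp s y) <= v <= maxn (hp s x) (hp s y) ->
  exists t, t <= size s /\ hp s t = v.
Proof.
move=> xs ys; case: (leqP x y) => xy.
  by have := @hp_ivt s x (y - x) v; rewrite subnKC //; apply.
have := @hp_ivt s y (x - y) v; rewrite subnKC; last by lia.
by rewrite minnC maxnC; apply.
Qed.

Definition mnI L s : 'I_L.+1 := [arg min_(i < ord0) hp s i].
Definition mxI L s : 'I_L.+1 := [arg max_(i > ord0) hp s i].
Definition gw L s : {ffun 'I_L.+1 -> 'I_L.+1} :=
  [ffun i : 'I_L.+1 => inord (hp s i - hp s (mnI L s))].

Lemma mnP L s (i : 'I_L.+1) : hp s (mnI L s) <= hp s i.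
Proof. by rewrite /mnI; case: arg_minnP => // j _ H; apply: H. Qed.

Lemma mxP L s (i : 'I_L.+1) : hp s i <= hp s (mxI L s).
Proof. by rewrite /mxI; case: arg_maxnP => // j _ H; apply: H. Qed.

Arguments mnP : clear implicits.
Arguments mxP : clear implicits.

Lemma hp_diff L s (i j : 'I_L.+1) : size s = L -> hp s i <= hp s j + L.
Proof.
move=> sL; have := ltn_ord i; have := ltn_ord j.
case: (leqP i j) => ij ? ?.
  have := hp_lip ij (_ : (j : nat) <= size s); lia.
have := hp_lip (ltnW ij) (_ : (i : nat) <= size s); lia.
Qed.

Lemma gw_val L s i : size s = L -> val (gw L s i) = hp s i - hp s (mnI L s).
Proof.
move=> sL; rewrite ffunE; apply: inordK; have := hp_diff i (mnI L s) sL; lia.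
Qed.

Lemma gw_ker L s i j : size s = L -> (gw L s i == gw L s j) = (hp s i == hp s j).
Proof.
move=> sL; rewrite -val_eqE /= !gw_val //; have := mnP L s i; have := mnP L s j.
move=> h1 h2; apply/eqP/eqP; lia.
Qed.

Lemma gw_endo L s : size s = L -> is_path_endo (gw L s).
Proof.
move=> sL; apply/forallP => i; apply/forallP => j; apply/implyP => /eqP ji.
have {}ji : nat_of_ord j = (nat_of_ord i).+1 by [].
rewrite /path_adj !gw_val //.
have iL : (i : nat) < size s by have := ltn_ord j; lia.
have := hp_step iL; rewrite -ji.
have := mnP L s i; have := mnP L s j.
case: (nth false s i) => /= h1 h2 h3; apply/orP; [right|left]; apply/eqP; lia.
Qed.

Lemma card_preim (T rT : finType) (f : T -> rT) :
  #|preim_partition f [set: T]| = #|f @: [set: T]|.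
Proof.
have -> : preim_partition f [set: T] = [set [set y | f y == v] | v in f @: [set: T]].
  rewrite /preim_partition /equivalence_partition -imset_comp.
  by apply: eq_imset => x; apply/setP => y; rewrite !inE eq_sym.
apply: card_in_imset => _ _ /imsetP [x _ ->] /imsetP [x' _ ->] /setP E.
by have := E x; rewrite !inE eqxx => /esym /eqP.
Qed.

Lemma card_le_set L K : K <= L -> #|[set v : 'I_L.+1 | val v <= K]| = K.+1.
Proof.
move=> KL.
have HK : K.+1 <= L.+1 by [].
have -> : [set v : 'I_L.+1 | val v <= K] = [set widen_ord HK j | j : 'I_K.+1].
  apply/setP => v; rewrite !inE; apply/idP/imsetP => [vK|[j _ ->]].
    by exists (Ordinal (vK : (v : nat) < K.+1)) => //; apply: val_inj.
  by rewrite /= -ltnS.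
rewrite card_imset ?card_ord //; move=> x y /(congr1 val) /= E; exact: val_inj.
Qed.

Lemma card_image_gw L s : size s = L ->
  #|gw L s @: [set: 'I_L.+1]| = (hp s (mxI L s) - hp s (mnI L s)).+1.
Proof.
move=> sL.
have dL : hp s (mxI L s) - hp s (mnI L s) <= L by have := hp_diff (mxI L s) (mnI L s) sL; lia.
rewrite -(card_le_set dL); apply: eq_card => v; rewrite [in RHS]inE.
apply/imsetP/idP => [[i _ ->]|vK].
  rewrite gw_val //; have := mxP L s i; lia.
have {}vK : (v : nat) <= hp s (mxI L s) - hp s (mnI L s) := vK.
have [t [tL ht]] : exists t, t <= size s /\ hp s t = v + hp s (mnI L s).
  apply: (hp_ivt2 (x := mnI L s) (y := mxI L s)).
  - by rewrite sL -ltnS.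
  - by rewrite sL -ltnS.
  have := mnP L s (mxI L s); lia.
have tL' : t < L.+1 by lia.
exists (Ordinal tL') => //; apply: val_inj; rewrite gw_val //= ht; lia.
Qed.

Lemma preim_eq_ker (T rT rT' : finType) (f : T -> rT) (g : T -> rT') :
  (forall x y, (f x == f y) = (g x == g y)) ->
  preim_partition f [set: T] = preim_partition g [set: T].
Proof.
move=> H; rewrite /preim_partition /equivalence_partition.
by apply: eq_imset => x; apply/setP => y; rewrite !inE H.
Qed.

Lemma pblock_preim (T rT : finType) (f : T -> rT) x y :
  (y \in pblock (preim_partition f [set: T]) x) = (f x == f y).
Proof.
apply: (pblock_equivalence_partition (R := fun x y => f x == f y)) => //.
by move=> a b c _ _ _ /=; split => // /eqP ->.
Qed.

Lemma preim_ker (T rT rT' : finType) (f : T -> rT) (g : T -> rT') :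
  preim_partition f [set: T] = preim_partition g [set: T] ->
  forall x y, (f x == f y) = (g x == g y).
Proof. by move=> E x y; rewrite -!pblock_preim E. Qed.

Lemma hp_negb_ker s i j : i <= size s -> j <= size s ->
  (hp (map negb s) i == hp (map negb s) j) = (hp s i == hp s j).
Proof.
move=> iS js; rewrite /hp size_map !up_negb //.
have := up_le s i; have := up_le s j => ? ?; apply/eqP/eqP; lia.
Qed.

Lemma hp_two s i : i.+1 < size s ->
  (hp s i == hp s i.+2) = (nth false s i != nth false s i.+1).
Proof.
move=> H.
have h1 := hp_step (ltnW H); have h2 := hp_step H.
case: (nth false s i) h1; case: (nth false s i.+1) h2 => /= h2 h1; apply/eqP; lia.
Qed.

Lemma ker_eq_seq s t : size s = size t ->
  (forall i j, i <= size s -> j <= size s -> (hp s i == hp s j) = (hp t i == hp t j)) ->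
  s = t \/ s = map negb t.
Proof.
move=> st K.
have Hn : forall i, i.+1 < size s ->
   (nth false s i == nth false s i.+1) = (nth false t i == nth false t i.+1).
  move=> i H; apply: negb_inj; rewrite -hp_two // -hp_two -1?st // K //; lia.
have key : forall i, i < size s ->
   (nth false s i == nth false t i) = (nth false s 0 == nth false t 0).
  elim=> [//|i IH] H; rewrite -IH; last lia.
  have := Hn i H; case: (nth false s i); case: (nth false s i.+1);
  case: (nth false t i); case: (nth false t i.+1) => //.
case: (boolP (nth false s 0 == nth false t 0)) => h0.
  left; apply: (eq_from_nth (x0 := false)) => // i H; apply/eqP; by rewrite key // h0.
right; apply: (eq_from_nth (x0 := false)); rewrite ?size_map // => i H.
rewrite (nth_map false); last by rewrite -st.
have := key i H; rewrite (negbTE h0); case: (nth false s i); case: (nth false t i) => //.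
Qed.

Definition sf L (f : {ffun 'I_L.+1 -> 'I_L.+1}) : seq bool :=
  mkseq (fun i => val (f (inord i)) < val (f (inord i.+1))) L.

Arguments sf : clear implicits.

Lemma size_sf L f : size (sf L f) = L.
Proof. exact: size_mkseq. Qed.

Lemma endo_up L (f : {ffun 'I_L.+1 -> 'I_L.+1}) : is_path_endo f ->
  forall i, i <= L -> val (f (inord i)) + i = val (f (inord 0)) + 2 * up (sf L f) i.
Proof.
move=> /forallP He; elim=> [|i IH] iL; first by rewrite up0 muln0 !addn0.
have iL' : i < size (sf L f) by rewrite size_sf.
rewrite (up_step iL') nth_mkseq; last by rewrite size_sf in iL'.
have := He (inord i) => /forallP /(_ (inord i.+1)) /implyP.
rewrite /= !inordK; [|lia|lia] => /(_ (eqxx _)).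
rewrite /path_adj; have := IH (ltnW iL).
case: ltnP => /= h1 h2 /orP [] /eqP; lia.
Qed.

Lemma endo_ker L (f : {ffun 'I_L.+1 -> 'I_L.+1}) : is_path_endo f ->
  forall x y : 'I_L.+1, (f x == f y) = (hp (sf L f) x == hp (sf L f) y).
Proof.
move=> He x y.
have hx := endo_up He (_ : (x : nat) <= L); rewrite inord_val in hx.
have hy := endo_up He (_ : (y : nat) <= L); rewrite inord_val in hy.
have := hx (ltn_ord x); have := hy (ltn_ord y) => {hx hy} hy hx.
rewrite -val_eqE /hp size_sf.
have := up_le (sf L f) x; have := up_le (sf L f) y; have := ltn_ord x; have := ltn_ord y.
move=> *; simpl in *; apply/eqP/eqP; lia.
Qed.

Lemma spanP_mm L S s : size s = L -> spanP S s <-> S + hp s (mnI L s) <= hp s (mxI L s).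
Proof.
move=> sL; split.
  case=> i [j [iS js H]].
  have := mnP L s (inord i); have := mxP L s (inord j); rewrite !inordK; lia.
move=> H; exists (mnI L s), (mxI L s); split => //; rewrite sL -ltnS; exact: ltn_ord.
Qed.

Lemma fallPS S s : fallP S.+1 s -> fallP S s.
Proof. by case=> i [j [? ? ?]]; exists i, j; split => //; lia. Qed.
Lemma risePS S s : riseP S.+1 s -> riseP S s.
Proof. by case=> i [j [? ? ?]]; exists i, j; split => //; lia. Qed.

Lemma rexact_card L S s : size s = L -> L < 2 * S -> rexact S s ->
  #|preim_partition (gw L s) [set: 'I_L.+1]| = S.+1.
Proof.
move=> sL LS /andP [r1 r2].
rewrite card_preim card_image_gw //.
have R1 : riseP S s by apply/riseP_reach.
have R2 : ~ riseP S.+1 s by move/riseP_reach; apply/negP.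
have F2 : ~ fallP S.+1 s by move/fallPS => F; apply: (rise_fall_excl (S := S) (s := s)) => //; lia.
have sp1 : spanP S s by apply/spanP_iff; left.
have sp2 : ~ spanP S.+1 s by move/spanP_iff => [].
move: sp1 sp2; rewrite !(spanP_mm _ sL) => h1 h2.
have h3 : ~ (S.+1 + hp s (mnI L s) <= hp s (mxI L s)) by [].
lia.
Qed.

Lemma card_rexact L S s : size s = L -> L < 2 * S ->
  #|preim_partition (gw L s) [set: 'I_L.+1]| = S.+1 -> rexact S s \/ rexact S (map negb s).
Proof.
move=> sL LS; rewrite card_preim card_image_gw // => H.
have sp1 : spanP S s by apply/(spanP_mm _ sL); lia.
have sp2 : ~ spanP S.+1 s by move/(spanP_mm _ sL); lia.
case/spanP_iff: sp1 => [R|F].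
  left; apply/andP; split; first by apply/riseP_reach.
  by apply/negP => /riseP_reach R'; apply: sp2; apply/spanP_iff; left.
right; apply/andP; split; first by apply/riseP_reach/fallP_negb.
by apply/negP => /riseP_reach/fallP_negb F'; apply: sp2; apply/spanP_iff; right.
Qed.

Lemma lk_card L S : L < 2 * S ->
  #|[set rho in CP L.+1 | #|rho| == S.+1]| = #|[set t : L.-tuple bool | rexact S (val t)]|.
Proof.
move=> LS.
pose Pm (t : L.-tuple bool) := preim_partition (gw L t) [set: 'I_L.+1].
have inj : {in [set t : L.-tuple bool | rexact S (val t)] &, injective Pm}.
  move=> t1 t2; rewrite !inE => r1 r2 E.
  have K := preim_ker E.
  have st : size t1 = size t2 by rewrite !size_tuple.
  have K' : forall i j, i <= size t1 -> j <= size t1 -> (hp t1 i == hp t1 j) = (hp t2 i == hp t2 j).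
    move=> i j iS jS; rewrite size_tuple in iS jS.
    have := K (inord i) (inord j); rewrite !gw_ker ?size_tuple //= !inordK //.
  case: (ker_eq_seq st K') => [/val_inj //|En].
  exfalso; move: r1 r2 => /andP [/riseP_reach R1 _] /andP [/riseP_reach R2 _].
  have R1' : riseP S (tval t1) := R1.
  rewrite En in R1'; move/fallP_negb: R1' => F2.
  by apply: (rise_fall_excl (s := t2) _ R2 F2); rewrite size_tuple.
rewrite -(card_in_imset inj); apply: eq_card => rho; rewrite [in LHS]inE.
apply/andP/imsetP.
  case=> /imsetP [f]; rewrite inE => fe -> /eqP c.
  have ss : size (sf L f) == L by rewrite size_sf.
  have Pf : induced_partition f = Pm (Tuple ss).
    rewrite /induced_partition /Pm; apply: preim_eq_ker => x y.
    by rewrite (endo_ker fe) gw_ker // size_sf.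
  rewrite Pf in c.
  case: (card_rexact (size_sf f) LS c) => r.
    by exists (Tuple ss); [rewrite inE | exact Pf].
  have ss' : size (map negb (sf L f)) == L by rewrite size_map size_sf.
  exists (Tuple ss'); first by rewrite inE.
  rewrite Pf /Pm; apply: preim_eq_ker => x y.
  rewrite gw_ker; last by rewrite size_sf.
  rewrite gw_ker; last by rewrite size_map size_sf.
  symmetry; apply: hp_negb_ker; by rewrite size_sf -ltnS.
case=> t; rewrite inE => r ->; split.
  by apply/imsetP; exists (gw L t) => //; rewrite inE gw_endo // size_tuple.
by rewrite (rexact_card (size_tuple t) LS r).
Qed.

Lemma binomz_pos a m : 0 < m -> binomz a (m%:Z - 1)%R = 'C(a, m - 1).
Proof. by case: m => // m _; rewrite -predn_int // subn1. Qed.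

Unset Implicit Arguments.
Unset Strict Implicit.

Theorem theorem3 (k n : nat) (hk : (1 <= k)%N) (hn : (2 * k <= n)%N) :
  l_k k n = (binomz n.-1 ((uphalf k)%:Z - 1)%R + binomz n.-1 ((k./2)%:Z - 1)%R)%N.
Proof.
case: n hn => [|L] hn; first lia.
rewrite /l_k /=.
have -> : L.+1 - k + 1 = (L.+1 - k).+1 by lia.
rewrite (@lk_card L (L.+1 - k)); last lia.
rewrite (card_tuple_pred L (rexact (L.+1 - k))) count_rexact; last lia.
have hu : 0 < uphalf k by move: hk; case: (k).
rewrite binomz_pos //.
rewrite /G (E_diff (_ : L.+1 - k <= L)); last lia.
have -> : L - (L.+1 - k) = k.-1 by lia.
have -> : (k.-1)./2 = uphalf k - 1 by move: hk; case: (k) => // k0 _ /=; lia.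
case: k hk hn hu => [//|[|k]] _ hn hu.
  have -> : L.+1 - 1 = L by lia.
  rewrite !E_big; [|lia|lia|lia].
  by rewrite /=; lia.
rewrite (E_diff (_ : (L.+1 - k.+2).+1 <= L)); last lia.
rewrite binomz_pos; last by [].
have -> : L - (L.+1 - k.+2).+1 = k by lia.
have -> : k./2 = k.+2./2 - 1 by rewrite /= subn1.
lia.
Qed.
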